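(* For $n\ge 2$, let $\mathsf{\Lambda}^2(\mathbb{C}^n)$ be the space of $n\times n$ complex skew-symmetric matrices and $\mu$ the structure tensor of the skew-symmetric matrix-vector product $\mathsf{\Lambda}^2(\mathbb{C}^n)\times\mathbb{C}^n\to\mathbb{C}^n$, $(A,x)\mapsto Ax$. Then $\operatorname{rank}(\mu)\le n^2-n-\lceil (n-1)/2\rceil+1$.
   Context: Structure tensor of a bilinear map $\beta:U\times V\to W$: the unique $\mu_\beta\in U^*\otimes V^*\otimes W$ with $\beta(u,v)=\mu_\beta(u,v,\cdot)$. Rank: least number of decomposable tensors summing to the tensor. *)

(* Defs.v *)
(* Complex numbers are modelled by algC (algebraic complex numbers). *)
From HB Require Import structures.
From mathcomp Require Import all_boot all_order all_algebra algC.
Set Implicit Arguments. Unset Strict Implicit. Unset Printing Implicit Defensive.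
Import Order.TTheory GRing.Theory Num.Theory.
Local Open Scope ring_scope.

Definition skewb (n : nat) : pred 'M[algC]_n := fun A => A^T == - A.

Lemma skewb_submod (n : nat) : subsemimod_closed (@skewb n).
Proof.
apply: GRing.submod_closed_semi; split.
  by rewrite unfold_in /skewb /= trmx0 oppr0.
move=> a A B; rewrite !unfold_in /skewb /= => /eqP hA /eqP hB.
by rewrite linearD linearZ /= hA hB scalerN opprD.
Qed.

HB.instance Definition _ (n : nat) := GRing.isSubmodClosed.Build algC 'M[algC]_n (@skewb n)
  (skewb_submod n).

Record skewmx (n : nat) := SkewMx { skval :> 'M[algC]_n; _ : @skewb n skval }.
HB.instance Definition _ (n : nat) := [isSub for @skval n].
HB.instance Definition _ (n : nat) := [Choice of skewmx n by <:].
HB.instance Definition _ (n : nat) := [SubChoice_isSubLmodule of skewmx n by <:].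

Definition lin_functional (F : comPzRingType) (U : lmodType F) (f : U -> F) :=
  forall (a : F) (x y : U), f (a *: x + y) = a * f x + f y.

(* The structure tensor mu_beta in U^* (x) V^* (x) W of a bilinear map beta is a sum of
   r decomposable tensors  f_k (x) g_k (x) w_k  iff
   beta(u,v) = sum_k f_k(u) g_k(v) w_k  for all u, v. *)
Definition struct_tensor_sum_of (F : comPzRingType) (U V W : lmodType F)
    (beta : U -> V -> W) (r : nat) :=
  exists (f : 'I_r -> U -> F) (g : 'I_r -> V -> F) (w : 'I_r -> W),
    [/\ forall k, lin_functional (f k),
        forall k, lin_functional (g k) &
        forall u v, beta u v = \sum_(k < r) (f k u * g k v) *: w k].

Definition struct_tensor_rank_le (F : comPzRingType) (U V W : lmodType F)
    (beta : U -> V -> W) (N : nat) :=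
  exists2 r : nat, (r <= N)%N & struct_tensor_sum_of beta r.

Definition skew_mv (n : nat) (A : skewmx n) (x : 'cV[algC]_n) : 'cV[algC]_n :=
  (skval A) *m x.

(* Main.v *)
Require Import Defs.
From HB Require Import structures.
From mathcomp Require Import all_boot all_order all_algebra algC zify ring.
Local Open Scope ring_scope.
Import GRing.Theory Num.Theory.

Lemma sum_of_pred (F : comPzRingType) (U V W : lmodType F) (beta : U -> V -> W)
  (T : finType) (P : pred T) (f : T -> U -> F) (g : T -> V -> F) (w : T -> W) :
  (forall t, lin_functional (f t)) -> (forall t, lin_functional (g t)) ->
  (forall u v, beta u v = \sum_(t in P) (f t u * g t v) *: w t) ->
  struct_tensor_sum_of beta #|P|.
Proof.
move=> hf hg hb.
exists (fun k => f (enum_val k)), (fun k => g (enum_val k)), (fun k => w (enum_val k)).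
by split => // u v; rewrite hb big_enum_val.
Qed.

Lemma skE n (a : algC) (A B : Defs.skewmx n) i j : (a *: A + B) i j = a * A i j + B i j.
Proof. by rewrite /= !mxE. Qed.

Lemma skN n (A : Defs.skewmx n) i j : A i j = - A j i.
Proof.
case: A => M /= /eqP h.
by move: (congr1 (fun B : 'M[algC]_n => B j i) h); rewrite !mxE.
Qed.

Lemma sk0 n (A : Defs.skewmx n) i : A i i = 0.
Proof.
have /eqP := skN _ A i i; rewrite -addr_eq0 -mulr2n mulrn_eq0 /=.
by move/eqP.
Qed.

Lemma cvE n (a : algC) (x y : 'cV[algC]_n) i : (a *: x + y) i 0 = a * x i 0 + y i 0.
Proof. by rewrite !mxE. Qed.

Lemma sum_deltaL n (k : 'I_n) (F : 'I_n -> algC) :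
  \sum_(i < n) (k == i)%:R * F i = F k.
Proof.
rewrite (bigD1 k) //= eqxx mul1r big1 ?addr0 // => i /negbTE.
by rewrite eq_sym => ->; rewrite mul0r.
Qed.

Lemma sum_deltaR n (k : 'I_n) (F : 'I_n -> algC) :
  \sum_(i < n) F i * (k == i)%:R = F k.
Proof. rewrite -[RHS](sum_deltaL _ k F); apply: eq_bigr => i _; exact: mulrC. Qed.

Lemma cardE (T : finType) (Q : pred T) : #|Q| = (\sum_(p : T) (Q p : nat))%N.
Proof.
rewrite -sum1_card big_mkcond /=; apply: eq_bigr => p _.
by rewrite unfold_in; case: (Q p).
Qed.

Lemma diag_count n : (\sum_(p : 'I_n * 'I_n) (p.1 == p.2 : nat))%N = n.
Proof.
rewrite -(pair_big xpredT xpredT (fun i j => (i == j : nat))) /=.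
rewrite -[RHS]card_ord -sum1_card; apply: eq_bigr => i _.
rewrite (bigD1 i) //= eqxx big1 ?addn0 // => j /negbTE.
by rewrite eq_sym => ->.
Qed.

Lemma all_count n : (\sum_(p : 'I_n * 'I_n) 1)%N = (n * n)%N.
Proof. by rewrite sum1_card card_prod card_ord. Qed.

Arguments sum_of_pred {F U V W beta T P} f g w.

Definition ev {n} (i : 'I_n) : 'cV[algC]_n := delta_mx i 0.

Lemma dec_off n :
  struct_tensor_sum_of (@skew_mv n) #|[pred p : 'I_n * 'I_n | p.1 != p.2]|.
Proof.
apply: (sum_of_pred (fun p (A : Defs.skewmx n) => A p.1 p.2)
   (fun p (x : 'cV[algC]_n) => x p.2 0) (fun p => ev p.1)).
- by move=> p a A B; rewrite skE.
- by move=> p a x y; rewrite cvE.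
move=> A x; apply/matrixP => k l; rewrite (ord1 l) {l}.
rewrite /skew_mv !mxE summxE.
transitivity (\sum_(p : 'I_n * 'I_n) (k == p.1)%:R * (A p.1 p.2 * x p.2 0)).
  rewrite -(pair_big xpredT xpredT (fun i j => (k == i)%:R * (A i j * x j 0))) /=.
  under [RHS]eq_bigr do rewrite -mulr_sumr.
  by rewrite sum_deltaL.
rewrite [RHS]big_mkcond /=.
apply: eq_bigr => [[i j]] _ /=; rewrite inE /= !mxE.
have [->|_] /= := eqVneq i j; first by rewrite sk0 !mul0r mulr0.
by rewrite eqxx andbT mulrC.
Qed.

Lemma card_off n : #|[pred p : 'I_n * 'I_n | p.1 != p.2]| = (n * n - n)%N.
Proof.
have h : (\sum_(p : 'I_n * 'I_n) (p.1 != p.2 : nat) + \sum_(p : 'I_n * 'I_n) (p.1 == p.2 : nat) = n * n)%N.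
  rewrite -big_split /= -all_count; apply: eq_bigr => p _; by case: (_ == _).
rewrite cardE /=; rewrite diag_count in h; rewrite -h addnK; exact: eq_bigr.
Qed.

Lemma card_tri n :
  (#|[pred p : 'I_n * 'I_n | (p.1 <= p.2)%N]| + #|[pred p : 'I_n * 'I_n | (p.1 <= p.2)%N]|
    = n * n + n)%N.
Proof.
have sw : (\sum_(p : 'I_n * 'I_n) (p.2 <= p.1)%N = \sum_(p : 'I_n * 'I_n) (p.1 <= p.2)%N)%N.
  have inj : injective (fun p : 'I_n * 'I_n => (p.2, p.1)).
    by case=> a b [c d] [-> ->].
  by rewrite [LHS](@reindex_inj _ _ _ _ _ xpredT (fun p : 'I_n * 'I_n => nat_of_bool (p.2 <= p.1)%N) inj).
rewrite cardE /=.
have -> : (\sum_(p : 'I_n * 'I_n) [pred p : 'I_n * 'I_n | (p.1 <= p.2)%N] p =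
   \sum_(p : 'I_n * 'I_n) (p.1 <= p.2)%N)%N by exact: eq_bigr.
rewrite -{2}sw -big_split /=.
transitivity (\sum_(p : 'I_n * 'I_n) (1 + (p.1 == p.2 : nat)))%N; last first.
  by rewrite big_split /= all_count diag_count.
apply: eq_bigr => [[a b]] _ /=.
rewrite -val_eqE /=; by case: ltngtP.
Qed.

Lemma dec_tri n :
  struct_tensor_sum_of (@skew_mv n) #|[pred p : 'I_n * 'I_n | (p.1 <= p.2)%N]|.
Proof.
apply: (sum_of_pred
  (fun (p : 'I_n * 'I_n) (A : Defs.skewmx n) => if (p.1 < p.2)%N then A p.1 p.2 else - \sum_j A p.1 j)
  (fun (p : 'I_n * 'I_n) (x : 'cV[algC]_n) => if (p.1 < p.2)%N then x p.1 0 + x p.2 0 else x p.1 0)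
  (fun p : 'I_n * 'I_n => if (p.1 < p.2)%N then ev p.1 - ev p.2 else ev p.1)).
- move=> p a A B; case: ifP => _; first by rewrite skE.
  under eq_bigr do rewrite skE.
  by rewrite big_split /= -mulr_sumr opprD mulrN.
- by move=> p a x y; case: ifP => _; rewrite !cvE; ring.
move=> A x; apply/matrixP => k l; rewrite (ord1 l) {l}.
rewrite /skew_mv !mxE summxE.
pose S i := \sum_j A i j.
pose G (p : 'I_n * 'I_n) :=
  A p.1 p.2 * (x p.1 0 + x p.2 0) * ((k == p.1)%:R - (k == p.2)%:R).
have step1 : \sum_(p in [pred p : 'I_n * 'I_n | (p.1 <= p.2)%N])
   (((if (p.1 < p.2)%N then A p.1 p.2 else - \sum_j A p.1 j) *
     (if (p.1 < p.2)%N then x p.1 0 + x p.2 0 else x p.1 0)) *: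
    (if (p.1 < p.2)%N then ev p.1 - ev p.2 else ev p.1)) k 0 =
  \sum_(p : 'I_n * 'I_n) (if (p.1 < p.2)%N then G p else 0) +
  \sum_(p : 'I_n * 'I_n) (if p.1 == p.2 then (k == p.1)%:R * (- S p.1 * x p.1 0) else 0).
  rewrite big_mkcond -big_split; apply: eq_bigr => [[i j]] _ /=.
  rewrite inE /=.
  case: (ltngtP i j) => h.
  - have -> : (i == j) = false by rewrite -val_eqE /= ltn_eqF.
    by rewrite /G /ev !mxE /= !eqxx !andbT addr0.
  - have -> : (i == j) = false by rewrite -val_eqE /= gtn_eqF.
    by rewrite addr0.
  - have e : i = j := val_inj h. subst j.
    by rewrite eqxx /ev /S !mxE /= eqxx andbT add0r; ring.
rewrite step1 {step1}.
have step2 : \sum_(p : 'I_n * 'I_n)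
    (if p.1 == p.2 then (k == p.1)%:R * (- S p.1 * x p.1 0) else 0) = - S k * x k 0.
  rewrite -(pair_big xpredT xpredT
    (fun i j => if i == j then (k == i)%:R * (- S i * x i 0) else 0)) /=.
  rewrite -[RHS](sum_deltaL _ k (fun i => - S i * x i 0)); apply: eq_bigr => i _.
  rewrite (bigD1 i) //= eqxx big1 ?addr0 // => j.
  by rewrite eq_sym => /negbTE ->.
have step3 : \sum_(p : 'I_n * 'I_n) G p = 2 * \sum_j A k j * (x k 0 + x j 0).
  rewrite /G; under eq_bigr do rewrite mulrBr; rewrite sumrB.
  rewrite -(pair_big xpredT xpredT (fun i j => A i j * (x i 0 + x j 0) * (k == i)%:R)) /=.
  rewrite -(pair_big xpredT xpredT (fun i j => A i j * (x i 0 + x j 0) * (k == j)%:R)) /=.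
  under eq_bigr do rewrite -mulr_suml.
  rewrite sum_deltaR.
  under eq_bigr do rewrite sum_deltaR.
  have -> : \sum_i A i k * (x i 0 + x k 0) = - \sum_j A k j * (x k 0 + x j 0).
    rewrite -sumrN; apply: eq_bigr => i _; rewrite (skN _ A i k); ring.
  ring.
have inj : injective (fun p : 'I_n * 'I_n => (p.2, p.1)).
  by case=> a b [c d] [-> ->].
have step4 : \sum_(p : 'I_n * 'I_n) G p =
    2 * \sum_(p : 'I_n * 'I_n) (if (p.1 < p.2)%N then G p else 0).
  have sym : forall p : 'I_n * 'I_n, G (p.2, p.1) = G p.
    by move=> [i j]; rewrite /G /= (skN _ A j i); ring.
  transitivity (\sum_(p : 'I_n * 'I_n)
     ((if (p.1 < p.2)%N then G p else 0) + (if (p.2 < p.1)%N then G p else 0))).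
    apply: eq_bigr => [[i j]] _ /=; case: (ltngtP i j) => h.
    - by rewrite addr0.
    - by rewrite add0r.
    - have e : i = j := val_inj h; subst j.
      by rewrite /G /= subrr mulr0 addr0.
  rewrite big_split /=.
  rewrite [X in _ + X = _](@reindex_inj _ _ _ _ _ xpredT
     (fun p : 'I_n * 'I_n => if (p.2 < p.1)%N then G p else 0) inj) /=.
  under [X in _ + X = _]eq_bigr do rewrite sym.
  ring.
rewrite step2.
have hT : \sum_(p : 'I_n * 'I_n) (if (p.1 < p.2)%N then G p else 0) =
    \sum_j A k j * (x k 0 + x j 0).
  apply: (@mulfI _ 2); first by rewrite pnatr_eq0.
  by rewrite -step4 step3.
rewrite hT.
have -> : \sum_j A k j * (x k 0 + x j 0) = S k * x k 0 + \sum_j A k j * x j 0.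
  by rewrite /S mulr_suml -big_split; apply: eq_bigr => j _ /=; ring.
ring.
Qed.

Theorem mainTheorem17 (n : nat) (hn : (2 <= n)%N) :
  struct_tensor_rank_le (@skew_mv n)
    (n ^ 2 - n - (n - 1).+1./2 + 1)%N.
Proof.
have [n2|n3] := eqVneq n 2.
  subst n; exists #|[pred p : 'I_2 * 'I_2 | p.1 != p.2]|; last exact: dec_off.
  by rewrite card_off.
exists #|[pred p : 'I_n * 'I_n | (p.1 <= p.2)%N]|; last exact: dec_tri.
have := card_tri n; have h3 : (3 <= n)%N by rewrite ltn_neqAle eq_sym n3 hn.
move=> h; rewrite -divn2 expnS expn1; nia.
Qed.
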